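(* Let $f:\mathbb{R}^p\to\mathbb{R}$ be convex and twice continuously differentiable, let $g_1,\dots,g_r:\mathbb{R}^p\to\mathbb{R}$ be affine, and let $h_1,\dots,h_s:\mathbb{R}^p\to\mathbb{R}$ be convex and twice continuously differentiable. For $\rho\ge 0$ put $$\mathcal{E}_\rho(\mathbf{x})=f(\mathbf{x})+\rho\sum_{i=1}^r|g_i(\mathbf{x})|+\rho\sum_{j=1}^s\max\{0,h_j(\mathbf{x})\}.$$ 1. (Uniqueness) If $\mathcal{E}_\rho$ is strictly convex, then it has at most one minimizer. 2. (Continuity) Let $\rho_0>0$. If there is an open interval $I\ni\rho_0$ of nonnegative numbers such that $\mathcal{E}_\rho$ is strictly convex and coercive for every $\rho\in I$, then for every $\rho\in I$ the function $\mathcal{E}_\rho$ has a unique minimizer $\mathbf{x}(\rho)$, and the map $\rho\mapsto\mathbf{x}(\rho)$ is continuous at $\rho_0$. 3. (Continuity of coefficients) Suppose in addition to the hypotheses of part 2 that for every $\rho\in I$ the vectors $\{\nabla g_i(\mathbf{x}(\rho)): g_i(\mathbf{x}(\rho))=0\}\cup\{\nabla h_j(\mathbf{x}(\rho)): h_j(\mathbf{x}(\rho))=0\}$ are linearly independent. Then for every $\rho\in I$ there is a unique coefficient vector $(s_1(\rho),\dots,s_r(\rho),t_1(\rho),\dots,t_s(\rho))$ satisfying the optimality condition below at $\mathbf{x}=\mathbf{x}(\rho)$, and the maps $\rho\mapsto s_i(\rho)$ and $\rho\mapsto t_j(\rho)$ are continuous at $\rho_0$.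
   Context: Optimality condition: for $\rho>0$ and $\mathbf{x}\in\mathbb{R}^p$, coefficients $s_i,t_j$ satisfy the optimality condition at $\mathbf{x}$ if $$\mathbf{0}=\nabla f(\mathbf{x})+\rho\sum_{i=1}^r s_i\nabla g_i(\mathbf{x})+\rho\sum_{j=1}^s t_j\nabla h_j(\mathbf{x}),$$ where $s_i=-1$ if $g_i(\mathbf{x})<0$, $s_i\in[-1,1]$ if $g_i(\mathbf{x})=0$, $s_i=1$ if $g_i(\mathbf{x})>0$, and $t_j=0$ if $h_j(\mathbf{x})<0$, $t_j\in[0,1]$ if $h_j(\mathbf{x})=0$, $t_j=1$ if $h_j(\mathbf{x})>0$. (A point $\mathbf{x}$ minimizes $\mathcal{E}_\rho$ iff such coefficients exist.) A function is coercive if it tends to $+\infty$ as $\|\mathbf{x}\|\to\infty$. *)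

(* Defs.v *)
From Stdlib Require Import Reals ClassicalEpsilon.
From mathcomp Require Import ssreflect ssrfun ssrbool eqtype ssrnat fintype bigop.
Set Implicit Arguments. Unset Strict Implicit.
Open Scope R_scope.

Definition Vec (p : nat) := 'I_p -> R.

Definition vsum (n : nat) (F : 'I_n -> R) : R := \big[Rplus/R0]_(i < n) F i.

Definition vadd p (x y : Vec p) : Vec p := fun k => x k + y k.
Definition vsub p (x y : Vec p) : Vec p := fun k => x k - y k.
Definition vscale p (a : R) (x : Vec p) : Vec p := fun k => a * x k.
Definition dot p (x y : Vec p) : R := vsum (fun k => x k * y k).
Definition vnorm p (x : Vec p) : R := sqrt (dot x x).

Definition convex p (F : Vec p -> R) : Prop :=
  forall x y t, 0 <= t <= 1 ->
    F (vadd (vscale t x) (vscale (1 - t) y)) <= t * F x + (1 - t) * F y.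

Definition strictly_convex p (F : Vec p -> R) : Prop :=
  forall x y t, x <> y -> 0 < t < 1 ->
    F (vadd (vscale t x) (vscale (1 - t) y)) < t * F x + (1 - t) * F y.

Definition affine p (G : Vec p -> R) : Prop :=
  exists (a : Vec p) (b : R), forall x, G x = dot a x + b.

Definition has_gradient p (F : Vec p -> R) (x gr : Vec p) : Prop :=
  forall eps, 0 < eps -> exists delta, 0 < delta /\
    forall y, vnorm (vsub y x) < delta ->
      Rabs (F y - F x - dot gr (vsub y x)) <= eps * vnorm (vsub y x).

Definition cont_at p (F : Vec p -> R) (x : Vec p) : Prop :=
  forall eps, 0 < eps -> exists delta, 0 < delta /\
    forall y, vnorm (vsub y x) < delta -> Rabs (F y - F x) < eps.

Definition C2 p (F : Vec p -> R) : Prop :=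
  exists (G : Vec p -> Vec p) (H : Vec p -> 'I_p -> Vec p),
    (forall x, has_gradient F x (G x)) /\
    (forall x i, has_gradient (fun y => G y i) x (H x i)) /\
    (forall i j x, cont_at (fun y => H y i j) x).

(* the gradient (well defined whenever F is differentiable at x) *)
Definition grad p (F : Vec p -> R) (x : Vec p) : Vec p :=
  epsilon (inhabits (fun _ => R0)) (fun gr => has_gradient F x gr).

Definition Epen p nr ns (f : Vec p -> R) (g : 'I_nr -> Vec p -> R)
  (h : 'I_ns -> Vec p -> R) (rho : R) (x : Vec p) : R :=
  f x + rho * vsum (fun i => Rabs (g i x)) + rho * vsum (fun j => Rmax 0 (h j x)).

Definition minimizer p (F : Vec p -> R) (x : Vec p) : Prop :=
  forall y, F x <= F y.

Definition coercive p (F : Vec p -> R) : Prop :=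
  forall M, exists R0, forall x, R0 < vnorm x -> M < F x.

Definition opt_cond p nr ns (f : Vec p -> R) (g : 'I_nr -> Vec p -> R)
  (h : 'I_ns -> Vec p -> R) (rho : R) (x : Vec p)
  (s : 'I_nr -> R) (t : 'I_ns -> R) : Prop :=
  (forall k, grad f x k + rho * vsum (fun i => s i * grad (g i) x k)
                        + rho * vsum (fun j => t j * grad (h j) x k) = 0) /\
  (forall i, (g i x < 0 -> s i = -1) /\ (g i x = 0 -> -1 <= s i <= 1) /\
             (g i x > 0 -> s i = 1)) /\
  (forall j, (h j x < 0 -> t j = 0) /\ (h j x = 0 -> 0 <= t j <= 1) /\
             (h j x > 0 -> t j = 1)).

Definition active_lin_indep p nr ns (g : 'I_nr -> Vec p -> R)
  (h : 'I_ns -> Vec p -> R) (x : Vec p) : Prop :=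
  forall (a : 'I_nr -> R) (b : 'I_ns -> R),
    (forall i, g i x <> 0 -> a i = 0) ->
    (forall j, h j x <> 0 -> b j = 0) ->
    (forall k, vsum (fun i => a i * grad (g i) x k)
             + vsum (fun j => b j * grad (h j) x k) = 0) ->
    (forall i, a i = 0) /\ (forall j, b j = 0).

Definition is_open_interval (I : R -> Prop) : Prop :=
  (forall x y z, I x -> I y -> x < z < y -> I z) /\
  (forall x, I x -> exists e, 0 < e /\ forall y, Rabs (y - x) < e -> I y).

(* Main.v *)
Require Import Defs.
From Stdlib Require Import Reals.
From mathcomp Require Import ssreflect ssrfun ssrbool eqtype ssrnat fintype bigop.
From Stdlib Require Import Lra Lia Classical ClassicalEpsilon FunctionalExtensionality.
From mathcomp Require Import seq.
From mathcomp Require Import Rstruct zify.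
Open Scope R_scope.
Set Implicit Arguments. Unset Strict Implicit.

Lemma vsum_ext n (F G : 'I_n -> R) : (forall i, F i = G i) -> vsum F = vsum G.
Proof. by move=> H; rewrite /vsum; apply: eq_bigr. Qed.
Lemma vsum_add n (F G : 'I_n -> R) : vsum (fun i => F i + G i) = vsum F + vsum G.
Proof. by rewrite /vsum big_split. Qed.
Lemma vsum_scal n c (F : 'I_n -> R) : vsum (fun i => c * F i) = c * vsum F.
Proof. by rewrite /vsum big_distrr. Qed.
Lemma vsum_le n (F G : 'I_n -> R) : (forall i, F i <= G i) -> vsum F <= vsum G.
Proof. move=> H; rewrite /vsum; elim/big_ind2: _ => //; [lra | move=> *; lra]. Qed.
Lemma vsum0 n : vsum (fun _ : 'I_n => 0) = 0.
Proof. by rewrite /vsum big1. Qed.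
Lemma vsum_opp n (F : 'I_n -> R) : vsum (fun i => - F i) = - vsum F.
Proof.
have -> : vsum (fun i => - F i) = vsum (fun i => (-1) * F i) by apply: vsum_ext=> i; ring.
rewrite vsum_scal; ring.
Qed.
Lemma vsum_sub n (F G : 'I_n -> R) : vsum (fun i => F i - G i) = vsum F - vsum G.
Proof. rewrite /Rminus -vsum_opp -vsum_add. by apply: vsum_ext. Qed.
Lemma vsum_ge0 n (F : 'I_n -> R) : (forall i, 0 <= F i) -> 0 <= vsum F.
Proof. move=> H; rewrite -(vsum0 n); exact: vsum_le. Qed.
Lemma vsum_single n (F : 'I_n -> R) k : (forall i, i <> k -> F i = 0) -> vsum F = F k.
Proof.
move=> H; rewrite /vsum (bigD1 k) //= big1; first by rewrite Rplus_0_r.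
by move=> i /eqP ik; apply: H.
Qed.
Lemma vsum_term_le n (F : 'I_n -> R) k : (forall i, 0 <= F i) -> F k <= vsum F.
Proof.
move=> H; rewrite /vsum (bigD1 k) //=.
set S := (X in _ <= _ + X); suff: 0 <= S by lra.
rewrite /S.
elim/big_ind: _ => //; [lra | move=> *; lra].
Qed.
Lemma vsum_abs n (F : 'I_n -> R) : Rabs (vsum F) <= vsum (fun i => Rabs (F i)).
Proof.
rewrite /vsum; elim/big_ind2: _ => //.
- rewrite Rabs_R0; lra.
- move=> a b c d H1 H2; apply: Rle_trans (Rabs_triang _ _) _; lra.
- move=> i _; lra.
Qed.
Lemma sq_sum_le (I : Type) (s : seq I) (F : I -> R) : (forall i, 0 <= F i) ->
  \big[Rplus/R0]_(i <- s) (F i * F i) <= (\big[Rplus/R0]_(i <- s) F i) * (\big[Rplus/R0]_(i <- s) F i).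
Proof.
move=> H; elim: s => [|a s IH]; first by rewrite !big_nil; lra.
rewrite !big_cons.
have S0 : 0 <= \big[Rplus/R0]_(i <- s) F i by elim/big_ind: _ => //; [lra| move=>*; lra].
have := H a; nra.
Qed.

Lemma dot_ge0 p (x : Vec p) : 0 <= dot x x.
Proof. apply: vsum_ge0 => i; nra. Qed.
Lemma vnorm_ge0 p (x : Vec p) : 0 <= vnorm x.
Proof. exact: sqrt_pos. Qed.
Lemma coord_le_vnorm p (x : Vec p) k : Rabs (x k) <= vnorm x.
Proof.
rewrite -sqrt_Rsqr_abs /vnorm; apply: sqrt_le_1_alt.
rewrite /Rsqr /dot; apply: (vsum_term_le (F := fun i => x i * x i)) => i; nra.
Qed.
Lemma vnorm_le_sum p (x : Vec p) : vnorm x <= vsum (fun k => Rabs (x k)).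
Proof.
have S0 : 0 <= vsum (fun k => Rabs (x k)) by apply: vsum_ge0 => i; apply: Rabs_pos.
rewrite /vnorm -(sqrt_Rsqr _ S0); apply: sqrt_le_1_alt.
have -> : dot x x = vsum (fun k => Rabs (x k) * Rabs (x k)).
  apply: vsum_ext => i; rewrite -Rabs_mult Rabs_right //; nra.
apply: sq_sum_le => i; exact: Rabs_pos.
Qed.
Lemma dot_bound p (a z : Vec p) : Rabs (dot a z) <= vsum (fun k => Rabs (a k)) * vnorm z.
Proof.
apply: Rle_trans (vsum_abs _) _; rewrite Rmult_comm -vsum_scal; apply: vsum_le => k.
rewrite Rabs_mult; have := coord_le_vnorm z k; have := Rabs_pos (a k); have := Rabs_pos (z k); nra.
Qed.
Lemma vnorm_scale p t (x : Vec p) : vnorm (vscale t x) = Rabs t * vnorm x.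
Proof.
rewrite /vnorm /dot.
have -> : vsum (fun k => vscale t x k * vscale t x k) = (t * t) * vsum (fun k => x k * x k).
  rewrite -vsum_scal; apply: vsum_ext => k; rewrite /vscale; ring.
rewrite sqrt_mult; [|nra|exact: (dot_ge0 x)].
by rewrite -[t * t]/(Rsqr t) sqrt_Rsqr_abs.
Qed.
Lemma vnorm_sub_self p (x : Vec p) : vnorm (vsub x x) = 0.
Proof.
rewrite /vnorm /dot (vsum_ext (G := fun _ => 0)); first by rewrite vsum0 sqrt_0.
move=> i; rewrite /vsub; ring.
Qed.

Lemma Un_cv_ext (u v : nat -> R) l : (forall n, u n = v n) -> Un_cv u l -> Un_cv v l.
Proof. move=> E H eps he; have [N HN] := H eps he; exists N => n hn; rewrite -E; exact: HN. Qed.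
Lemma CV_const c : Un_cv (fun _ => c) c.
Proof. move=> eps he; exists 0%nat => n _; rewrite /R_dist Rminus_eq_0 Rabs_R0; lra. Qed.
Lemma CV_bigseq (I : Type) (s : seq I) (u : I -> nat -> R) (l : I -> R) :
  (forall i, Un_cv (u i) (l i)) ->
  Un_cv (fun n => \big[Rplus/R0]_(i <- s) u i n) (\big[Rplus/R0]_(i <- s) l i).
Proof.
move=> H; elim: s => [|a s IH].
  rewrite big_nil; apply: (Un_cv_ext (u := fun _ => R0)); first by move=> n; rewrite big_nil.
  exact: CV_const.
rewrite big_cons; apply: (Un_cv_ext (u := fun n => u a n + \big[Rplus/R0]_(i <- s) u i n)).
  by move=> n; rewrite big_cons.
exact: CV_plus.
Qed.
Lemma CV_vsum n (u : 'I_n -> nat -> R) (l : 'I_n -> R) :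
  (forall i, Un_cv (u i) (l i)) -> Un_cv (fun m => vsum (fun i => u i m)) (vsum l).
Proof. move=> H; exact: CV_bigseq. Qed.
Lemma Rmax0_eq x : Rmax 0 x = (x + Rabs x) / 2.
Proof. rewrite /Rmax /Rabs; case: Rle_dec; case: Rcase_abs; lra. Qed.
Lemma CV_Rmax0 u l : Un_cv u l -> Un_cv (fun n => Rmax 0 (u n)) (Rmax 0 l).
Proof.
move=> H; rewrite Rmax0_eq; apply: (Un_cv_ext (u := fun n => (u n + Rabs (u n)) * / 2)).
  by move=> n; rewrite Rmax0_eq.
apply: CV_mult; last exact: CV_const.
apply: CV_plus => //; exact: cv_cvabs.
Qed.

Definition incr (phi : nat -> nat) := forall n, (phi n < phi (S n))%N.
Lemma incr_ge phi : incr phi -> forall n, (n <= phi n)%N.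
Proof. move=> H; elim=> [|n IH] //; have := H n; lia. Qed.
Lemma incr_mono phi : incr phi -> forall m n, (m < n)%N -> (phi m < phi n)%N.
Proof.
move=> H m; elim=> [|n IH] //; rewrite ltnS leq_eqVlt => /orP [/eqP->|/IH h]; first exact: H.
have := H n; lia.
Qed.
Lemma incr_comp phi psi : incr phi -> incr psi -> incr (fun n => phi (psi n)).
Proof. move=> H1 H2 n; apply: incr_mono => //; exact: H2. Qed.
Lemma CV_sub u l phi : incr phi -> Un_cv u l -> Un_cv (fun n => u (phi n)) l.
Proof.
move=> Hp H eps he; have [N HN] := H eps he; exists N => n hn; apply: HN.
have := incr_ge Hp n; move: hn; rewrite /ge; lia.
Qed.

Lemma Rabs_le_inv' a b : Rabs a <= b -> - b <= a <= b.
Proof. rewrite /Rabs; case: Rcase_abs; lra. Qed.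
Fixpoint build (pk : nat -> nat -> nat) n := match n with
  0%nat => pk 0%nat 0%nat | S n => pk (S (build pk n)) (S n) end.
Lemma BW1 (u : nat -> R) M : (forall n, Rabs (u n) <= M) ->
  exists phi l, incr phi /\ Un_cv (fun n => u (phi n)) l.
Proof.
move=> HM.
have [l Hl] := @Bolzano_Weierstrass u (fun c => -M <= c <= M) (compact_P3 _ _)
  (fun n => Rabs_le_inv' (HM n)).
have Hp : forall N k, exists q, (N <= q)%coq_nat /\ Rabs (u q - l) < / INR (S k).
  move=> N k.
  have pk : 0 < / INR (S k) by apply: Rinv_0_lt_compat; apply: lt_0_INR; lia.
  have [q [h1 h2]] := Hl (disc l (mkposreal _ pk)) N (ex_intro _ (mkposreal _ pk) (fun y hy => hy)).
  by exists q; split.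
have [pick pickP] : exists pick : nat -> nat -> nat, forall N k,
    (N <= pick N k)%coq_nat /\ Rabs (u (pick N k) - l) < / INR (S k).
  exists (fun N k => proj1_sig (constructive_indefinite_description _ (Hp N k))).
  move=> N k; exact: proj2_sig (constructive_indefinite_description _ (Hp N k)).
exists (build pick), l; split.
  move=> n; have [h _] := pickP (S (build pick n)) (S n); simpl; lia.
have Hd : forall n, Rabs (u (build pick n) - l) < / INR (S n).
  case=> [|n] /=; [case: (pickP 0%nat 0%nat) | case: (pickP (S (build pick n)) (S n))] => _ //.
move=> eps he; have [N [hN hN0]] := archimed_cor1 eps he; exists N => n hn.
rewrite /R_dist; apply: Rlt_trans (Hd n) _; apply: Rle_lt_trans hN.
apply: Rinv_le_contravar; first by apply: lt_0_INR; lia.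
apply: le_INR; rewrite /ge in hn; lia.
Qed.

Lemma BWvec p (u : nat -> Vec p) M : (forall n k, Rabs (u n k) <= M) ->
  exists phi (l : Vec p), incr phi /\ forall k, Un_cv (fun n => u (phi n) k) (l k).
Proof.
move=> HM.
suff: forall s : seq 'I_p, exists phi (l : Vec p), incr phi /\
   forall k, k \in s -> Un_cv (fun n => u (phi n) k) (l k).
  move=> /(_ (enum 'I_p)) [phi [l [h1 h2]]]; exists phi, l; split => // k.
  by apply: h2; rewrite mem_enum.
elim=> [|k s [phi [l [h1 h2]]]].
  exists id, (fun _ => 0); split => // n /=; lia.
have [psi [a [hp ha]]] := BW1 (fun n => HM (phi n) k).
exists (fun n => phi (psi n)), (fun k' => if k' == k then a else l k'); split.
  exact: incr_comp.
move=> k'; rewrite inE; case: eqP => [->|_ /= hk]; first by move=> _; exact: ha.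
exact: (CV_sub (u := fun n => u (phi n) k') hp (h2 _ hk)).
Qed.

Definition seqcont p (F : Vec p -> R) := forall (y : nat -> Vec p) x,
  Un_cv (fun n => vnorm (vsub (y n) x)) 0 -> Un_cv (fun n => F (y n)) (F x).

Lemma hg_cont p (F : Vec p -> R) x gr (y : nat -> Vec p) : has_gradient F x gr ->
  Un_cv (fun n => vnorm (vsub (y n) x)) 0 -> Un_cv (fun n => F (y n)) (F x).
Proof.
move=> Hg Hy eps he.
have [d [hd Hd]] := Hg 1 Rlt_0_1.
set C := vsum (fun k => Rabs (gr k)) + 1.
have hC : 0 < C by rewrite /C; have := vsum_ge0 (fun k => Rabs_pos (gr k)); lra.
have hm : 0 < Rmin d (eps / C) by apply: Rmin_pos => //; apply: Rdiv_lt_0_compat.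
have [N HN] := Hy _ hm; exists N => n hn.
have := HN n hn; rewrite /R_dist Rminus_0_r Rabs_right; last by apply: Rle_ge; exact: vnorm_ge0.
move=> hz; have hz1 : vnorm (vsub (y n) x) < d by apply: Rlt_le_trans hz (Rmin_l _ _).
have hz2 : vnorm (vsub (y n) x) < eps / C by apply: Rlt_le_trans hz (Rmin_r _ _).
have h1 := Hd _ hz1; have h2 := dot_bound gr (vsub (y n) x).
have h3 : C * vnorm (vsub (y n) x) < eps.
  have : C * vnorm (vsub (y n) x) < C * (eps / C) by apply: Rmult_lt_compat_l.
  by rewrite /Rdiv (Rmult_comm eps) -Rmult_assoc Rinv_r ?Rmult_1_l //; lra.
rewrite /R_dist.
have := Rabs_triang (F (y n) - F x - dot gr (vsub (y n) x)) (dot gr (vsub (y n) x)).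
have -> : F (y n) - F x - dot gr (vsub (y n) x) + dot gr (vsub (y n) x) = F (y n) - F x by ring.
move: h3; rewrite /C; lra.
Qed.

Lemma vcv_norm p (y : nat -> Vec p) x : (forall k, Un_cv (fun n => y n k) (x k)) ->
  Un_cv (fun n => vnorm (vsub (y n) x)) 0.
Proof.
move=> H.
have Hs : Un_cv (fun n => vsum (fun k => Rabs (vsub (y n) x k))) 0.
  rewrite -(vsum0 p); apply: CV_vsum => k; rewrite -Rabs_R0 -(Rminus_eq_0 (x k)).
  apply: cv_cvabs; apply: CV_minus => //; exact: CV_const.
move=> eps he; have [N HN] := Hs eps he; exists N => n hn; have := HN n hn.
rewrite /R_dist !Rminus_0_r => h; apply: Rle_lt_trans h.
rewrite Rabs_right; last by apply: Rle_ge; exact: vnorm_ge0.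
apply: Rle_trans (vnorm_le_sum _) (Rle_abs _).
Qed.

Lemma choice_nat (A : Type) (P : nat -> A -> Prop) :
  (forall n, exists a, P n a) -> exists f, forall n, P n (f n).
Proof.
move=> H; exists (fun n => proj1_sig (constructive_indefinite_description _ (H n))).
move=> n; exact: proj2_sig (constructive_indefinite_description _ (H n)).
Qed.

Lemma cv_inv_S : Un_cv (fun n => / INR (S n)) 0.
Proof.
move=> eps he; have [N [hN hN0]] := archimed_cor1 eps he; exists N => n hn.
have hp : 0 < / INR (S n) by apply: Rinv_0_lt_compat; apply: lt_0_INR; lia.
rewrite /R_dist Rminus_0_r Rabs_right; last lra.
apply: Rle_lt_trans hN; apply: Rinv_le_contravar; first by apply: lt_0_INR; lia.
apply: le_INR; rewrite /ge in hn; lia.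
Qed.

Lemma coercive_bound p (F : Vec p -> R) M : coercive F ->
  exists B, forall x, F x <= M -> forall k, Rabs (x k) <= B.
Proof.
move=> HC; have [B HB] := HC M; exists B => x hx k.
apply: Rle_trans (coord_le_vnorm x k) _.
case: (Rle_dec (vnorm x) B) => // /Rnot_le_lt h; have := HB x h; lra.
Qed.

Lemma exists_min p (F : Vec p -> R) : seqcont F -> coercive F -> exists x, minimizer F x.
Proof.
move=> HF HC.
set x0 : Vec p := fun _ => 0.
have [B HB] := coercive_bound (F x0) HC.
have Hsub : forall y : nat -> Vec p, (forall n, F (y n) <= F x0) ->
    exists phi l, incr phi /\ Un_cv (fun n => F (y (phi n))) (F l).
  move=> y hy.
  have [phi [l [hp hl]]] := BWvec (M := B) (u := y) (fun n k => HB _ (hy n) k).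
  exists phi, l; split => //; apply: (HF (fun n => y (phi n))); exact: vcv_norm.
have [m Hm] : exists m, forall x, m <= F x.
  apply: NNPP => hn.
  have H1 : forall n, exists x, F x < Rmin (F x0) (- INR n).
    move=> n; apply: NNPP => h2; apply: hn; exists (Rmin (F x0) (- INR n)) => x.
    by apply: Rnot_lt_le => h3; apply: h2; exists x.
  have [y hy] := choice_nat H1.
  have [phi [l [hp hl]]] := Hsub y (fun n => Rlt_le _ _ (Rlt_le_trans _ _ _ (hy n) (Rmin_l _ _))).
  have [N HN] := hl 1 Rlt_0_1.
  have [n0 hn0] := INR_unbounded (- F l + 1).
  set n := (N + n0)%nat.
  have := HN n ltac:(rewrite /n /ge; lia); rewrite /R_dist => h.
  have h4 := Rlt_le_trans _ _ _ (hy (phi n)) (Rmin_r _ _).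
  have h5 : INR n0 <= INR (phi n) by apply: le_INR; have := incr_ge hp n; rewrite /n; lia.
  clearbody n; move: h; rewrite /Rabs; case: Rcase_abs => hc h; lra.
set E := fun r => exists x, r = - F x.
have hb : bound E.
  exists (- m) => r [x ->]; have := Hm x; lra.
have he : exists r, E r by exists (- F x0), x0.
have [M [HM1 HM2]] := completeness E hb he.
have Hlow : forall x, - M <= F x.
  move=> x; have := HM1 (- F x) (ex_intro _ x erefl); lra.
have H2 : forall n, exists x, F x < - M + / INR (S n) /\ F x <= F x0.
  move=> n.
  have hpos : 0 < / INR (S n) by apply: Rinv_0_lt_compat; apply: lt_0_INR; lia.
  case: (Rle_dec (F x0) (- M + / INR (S n) / 2)) => hx0.
    exists x0; split; [lra | exact: Rle_refl].
  apply: NNPP => h; have : M <= M - / INR (S n) / 2; last by lra.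
  apply: HM2 => r [x ->].
  case: (Rle_dec (F x) (F x0)) => hx.
    suff: - M + / INR (S n) <= F x by lra.
    by apply: Rnot_lt_le => h3; apply: h; exists x.
  lra.
have [y hy] := choice_nat H2.
have [phi [l [hp hl]]] := Hsub y (fun n => proj2 (hy n)).
exists l => z; apply: Rle_trans _ (Hlow z).
have hcv : Un_cv (fun n => - M + / INR (S n)) (- M).
  rewrite -{2}(Rplus_0_r (- M)); apply: CV_plus; [exact: CV_const | exact: cv_inv_S].
have hcv2 := CV_sub hp hcv.
have hh : forall n, F (y (phi n)) <= - M + / INR (S (phi n)) by move=> n; case: (hy (phi n)) => h1 _; lra.
exact: (Rle_cv_lim hh hl hcv2).
Qed.

Lemma dot_sub p (a x y : Vec p) : dot a (vsub y x) = dot a y - dot a x.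
Proof. rewrite /dot -vsum_sub; apply: vsum_ext => k; rewrite /vsub; ring. Qed.

Lemma affine_grad p (G : Vec p -> R) a b : (forall x, G x = dot a x + b) ->
  forall x, has_gradient G x a.
Proof.
move=> HG x eps he; exists 1; split; first lra.
move=> y _; rewrite !HG dot_sub.
have -> : dot a y + b - (dot a x + b) - (dot a y - dot a x) = 0 by ring.
rewrite Rabs_R0; apply: Rmult_le_pos; [lra | exact: vnorm_ge0].
Qed.

Lemma C2_seqcont p (F : Vec p -> R) : C2 F -> seqcont F.
Proof. move=> [G [H [h1 _]]] y x hy; exact: (hg_cont (h1 x) hy). Qed.
Lemma affine_seqcont p (F : Vec p -> R) : affine F -> seqcont F.
Proof. move=> [a [b hab]] y x hy; exact: (hg_cont (affine_grad hab x) hy). Qed.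

Lemma strict_unique p (F : Vec p -> R) : strictly_convex F ->
  forall x y, minimizer F x -> minimizer F y -> x = y.
Proof.
move=> HF x y hx hy; apply: NNPP => hne.
have := HF x y (/2) hne ltac:(lra).
have := hx (vadd (vscale (/2) x) (vscale (1 - /2) y)).
have := hx y; have := hy x; lra.
Qed.

Lemma Pen_ge0 p nr ns (g : 'I_nr -> Vec p -> R) (h : 'I_ns -> Vec p -> R) x :
  0 <= vsum (fun i => Rabs (g i x)) /\ 0 <= vsum (fun j => Rmax 0 (h j x)).
Proof.
split; apply: vsum_ge0 => i; [exact: Rabs_pos | exact: Rmax_l].
Qed.

Lemma Epen_mono p nr ns (f : Vec p -> R) (g : 'I_nr -> Vec p -> R) (h : 'I_ns -> Vec p -> R) r1 r2 x :
  r1 <= r2 -> Epen f g h r1 x <= Epen f g h r2 x.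
Proof.
move=> hr; rewrite /Epen; have [h1 h2] := Pen_ge0 g h x.
have := Rmult_le_compat_r _ _ _ h1 hr; have := Rmult_le_compat_r _ _ _ h2 hr; lra.
Qed.

Lemma Epen_cont p nr ns (f : Vec p -> R) (g : 'I_nr -> Vec p -> R) (h : 'I_ns -> Vec p -> R)
  (Hf : seqcont f) (Hg : forall i, seqcont (g i)) (Hh : forall j, seqcont (h j))
  (r : nat -> R) rho (x : nat -> Vec p) l :
  Un_cv r rho -> Un_cv (fun n => vnorm (vsub (x n) l)) 0 ->
  Un_cv (fun n => Epen f g h (r n) (x n)) (Epen f g h rho l).
Proof.
move=> hr hx; rewrite /Epen.
apply: CV_plus; first apply: CV_plus; first exact: Hf.
- apply: CV_mult => //; apply: (CV_vsum (u := fun i n => Rabs (g i (x n)))) => i.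
  apply: cv_cvabs; exact: Hg.
- apply: CV_mult => //; apply: (CV_vsum (u := fun i n => Rmax 0 (h i (x n)))) => i.
  apply: CV_Rmax0; exact: Hh.
Qed.

Definition xmin p nr ns (f : Vec p -> R) (g : 'I_nr -> Vec p -> R) (h : 'I_ns -> Vec p -> R) rho : Vec p :=
  epsilon (inhabits (fun _ => R0)) (fun x => minimizer (Epen f g h rho) x).

Lemma open_int_nbhd (J : R -> Prop) rho0 : is_open_interval J -> J rho0 ->
  exists e, 0 < e /\ forall y, Rabs (y - rho0) < e -> J y.
Proof. by move=> [_ H] /H. Qed.

Lemma part2 p nr ns (f : Vec p -> R) (g : 'I_nr -> Vec p -> R) (h : 'I_ns -> Vec p -> R)
  (Hf : seqcont f) (Hg : forall i, seqcont (g i)) (Hh : forall j, seqcont (h j))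
  rho0 (J : R -> Prop) :
  is_open_interval J -> J rho0 ->
  (forall rho, J rho -> strictly_convex (Epen f g h rho) /\ coercive (Epen f g h rho)) ->
  (forall rho, J rho -> minimizer (Epen f g h rho) (xmin f g h rho) /\
          (forall y, minimizer (Epen f g h rho) y -> y = xmin f g h rho)) /\
  (forall eps, 0 < eps -> exists delta, 0 < delta /\
          forall rho, J rho -> Rabs (rho - rho0) < delta ->
            vnorm (vsub (xmin f g h rho) (xmin f g h rho0)) < eps).
Proof.
move=> HJ J0 HSC.
have Hmin : forall rho, J rho -> minimizer (Epen f g h rho) (xmin f g h rho).
  move=> rho hJ; rewrite /xmin; apply: epsilon_spec.
  have [_ hc] := HSC rho hJ; apply: exists_min hc.
  move=> y x hy; apply: (Epen_cont Hf Hg Hh (CV_const rho) hy).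
have Huniq : forall rho, J rho -> forall y, minimizer (Epen f g h rho) y -> y = xmin f g h rho.
  move=> rho hJ y hy; have [hs _] := HSC rho hJ; exact: (strict_unique hs hy (Hmin rho hJ)).
split; first by move=> rho hJ; split; [exact: Hmin | exact: Huniq].
have [e [he HJe]] := open_int_nbhd HJ J0.
set rho1 := rho0 - e / 2; set rho2 := rho0 + e / 2.
have J1 : J rho1 by apply: HJe; rewrite /rho1; rewrite Rabs_left; lra.
have J2 : J rho2 by apply: HJe; rewrite /rho2; rewrite Rabs_right; lra.
set x0 := xmin f g h rho0.
have [B HB] := coercive_bound (Epen f g h rho2 x0) (proj2 (HSC rho1 J1)).
have Hbd : forall rho, J rho -> Rabs (rho - rho0) < e / 2 -> forall k, Rabs (xmin f g h rho k) <= B.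
  move=> rho hJ hr; apply: HB.
  have hr' := Rabs_le_inv' (Rlt_le _ _ hr).
  have hr1 : rho1 <= rho by rewrite /rho1; lra.
  have hr2 : rho <= rho2 by rewrite /rho2; lra.
  apply: Rle_trans (Epen_mono f g h (xmin f g h rho) hr1) _.
  apply: Rle_trans (Hmin rho hJ x0) _; exact: Epen_mono.
move=> eps heps; apply: NNPP => Hn.
have H1 : forall n, exists rho, J rho /\ Rabs (rho - rho0) < Rmin (e / 2) (/ INR (S n)) /\
    eps <= vnorm (vsub (xmin f g h rho) x0).
  move=> n; apply: NNPP => h2; apply: Hn; exists (Rmin (e / 2) (/ INR (S n))); split.
    apply: Rmin_pos; first lra; apply: Rinv_0_lt_compat; apply: lt_0_INR; lia.
  move=> rho hJ hr; apply: Rnot_le_lt => h3; apply: h2; exists rho; split => //.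
have [r hr] := choice_nat H1.
have [phi [l [hp hl]]] := BWvec (M := B) (u := fun n => xmin f g h (r n))
  (fun n => Hbd (r n) (proj1 (hr n)) (Rlt_le_trans _ _ _ (proj1 (proj2 (hr n))) (Rmin_l _ _))).
have hrc : Un_cv r rho0.
  move=> eps' he'; have [N HN] := cv_inv_S he'; exists N => n hn.
  have := HN n hn; rewrite /R_dist Rminus_0_r => h3.
  have h4 := Rlt_le_trans _ _ _ (proj1 (proj2 (hr n))) (Rmin_r _ _).
  apply: Rlt_trans h4 _; apply: Rle_lt_trans (Rle_abs _) h3.
have hrc' := CV_sub hp hrc.
have hxl := vcv_norm hl.
have hlmin : minimizer (Epen f g h rho0) l.
  move=> y.
  have c1 := Epen_cont Hf Hg Hh hrc' hxl.
  have c2 : Un_cv (fun n => Epen f g h (r (phi n)) y) (Epen f g h rho0 y).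
    apply: (Epen_cont Hf Hg Hh hrc' (x := fun _ => y)).
    apply: (Un_cv_ext (u := fun _ => 0)); first by move=> n; rewrite vnorm_sub_self.
    exact: CV_const.
  apply: (Rle_cv_lim _ c1 c2) => n.
  exact: (Hmin _ (proj1 (hr (phi n))) y).
have hl0 : l = x0 := Huniq rho0 J0 l hlmin.
have [N HN] := hxl eps heps.
have := HN N (le_n N); rewrite /R_dist Rminus_0_r hl0 Rabs_right; last by apply: Rle_ge; exact: vnorm_ge0.
move=> h5; exact: (Rlt_not_le _ _ h5 (proj2 (proj2 (hr (phi N))))).
Qed.

Lemma dot_vsum_seq p (I : Type) (s : seq I) (c : I -> R) (w : I -> Vec p) (d : Vec p) :
  dot (fun l => \big[Rplus/R0]_(k <- s) (c k * w k l)) d = \big[Rplus/R0]_(k <- s) (c k * dot (w k) d).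
Proof.
elim: s => [|a s IH].
  rewrite big_nil /dot; rewrite (@vsum_ext _ _ (fun _ => 0)); first by rewrite vsum0.
  move=> l; rewrite big_nil; ring.
rewrite big_cons -IH /dot -vsum_scal -vsum_add; apply: vsum_ext => l; rewrite big_cons; ring.
Qed.
Lemma dot_comb_r p (a x y : Vec p) q : dot a (fun l => x l - q * y l) = dot a x - q * dot a y.
Proof. rewrite /dot -vsum_scal -vsum_sub; apply: vsum_ext => l; ring. Qed.
Lemma dot_comb_l p (x y d : Vec p) q : dot (fun l => x l - q * y l) d = dot x d - q * dot y d.
Proof. rewrite /dot -vsum_scal -vsum_sub; apply: vsum_ext => l; ring. Qed.
Lemma dot_scal_r p (a x : Vec p) q : dot a (fun l => q * x l) = q * dot a x.
Proof. rewrite /dot -vsum_scal; apply: vsum_ext => l; ring. Qed.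
Lemma dot_neg_r p (a x : Vec p) : dot a (fun l => - x l) = - dot a x.
Proof. rewrite /dot -vsum_opp; apply: vsum_ext => l; ring. Qed.

Lemma span_or_perp p (I : eqType) (w : I -> Vec p) (s : seq I) : uniq s -> forall u : Vec p,
  (exists c : I -> R, forall l, u l = \big[Rplus/R0]_(k <- s) (c k * w k l)) \/
  (exists d : Vec p, (forall k, k \in s -> dot (w k) d = 0) /\ dot u d <> 0).
Proof.
elim: s => [|a s IH] /=.
  move=> _ u; case: (classic (forall l, u l = 0)) => hu.
    by left; exists (fun _ => 0) => l; rewrite big_nil; exact: hu.
  right; exists u; split => //.
  move: hu => /not_all_ex_not [l hl].
  have := vsum_term_le (F := fun k => u k * u k) l (fun k => ltac:(nra)).
  rewrite /dot; have : 0 < u l * u l by nra.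
  lra.
move=> /andP [ha hs] u.
case: (IH hs (w a)) => [[c hc] | [e [he hae]]].
  case: (IH hs u) => [[c' hc'] | [d [hd hud]]].
    left; exists (fun k => if k == a then 0 else c' k) => l; rewrite big_cons eqxx Rmult_0_l Rplus_0_l hc'.
    apply: eq_big_seq => k hk; case: eqP => // ka; subst k; by rewrite hk in ha.
  right; exists d; split => //.
  move=> k0; rewrite inE => /orP [/eqP -> | hk]; last exact: hd.
  have -> : w a = (fun l => \big[Rplus/R0]_(k <- s) (c k * w k l)) by apply: functional_extensionality.
  rewrite dot_vsum_seq big_seq big1 // => k hk; rewrite hd //; ring.
set r := dot u e / dot (w a) e.
case: (IH hs (fun l => u l - r * w a l)) => [[c hc] | [d [hd hud]]].
  left; exists (fun k => if k == a then r else c k) => l; rewrite big_cons eqxx.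
  rewrite (eq_big_seq (fun k => c k * w k l)); first by rewrite -hc; ring.
  move=> k hk; case: eqP => // ka; subst k; by rewrite hk in ha.
right; exists (fun l => d l - dot (w a) d / dot (w a) e * e l); split.
  move=> k; rewrite inE => /orP [/eqP -> | hk].
    rewrite dot_comb_r; field; exact: hae.
  rewrite dot_comb_r (hd k hk) (he k hk); ring.
rewrite dot_comb_r; move: hud; rewrite dot_comb_l /r => hud h; apply: hud.
rewrite -h; field; exact: hae.
Qed.

Definition LI_I p (I : finType) (W : I -> Vec p) (act : pred I) :=
  forall c : I -> R, (forall k, ~~ act k -> c k = 0) ->
   (forall l, \big[Rplus/R0]_(k : I) (c k * W k l) = 0) -> forall k, c k = 0.

Lemma dual_vec p (I : finType) (W : I -> Vec p) (act : pred I) : LI_I W act ->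
  forall k0, act k0 -> exists d, dot (W k0) d = 1 /\
    forall k, act k -> k != k0 -> dot (W k) d = 0.
Proof.
move=> HLI k0 hk0.
set s := [seq k <- index_enum I | act k && (k != k0)].
have us : uniq s by apply: filter_uniq; exact: index_enum_uniq.
case: (span_or_perp W us (W k0)) => [[c hc] | [d [hd hnz]]].
  exfalso.
  suff: (if act k0 then (if k0 == k0 then -1 else c k0) else 0) = 0 by rewrite hk0 eqxx; lra.
  apply: (HLI (fun k => if act k then (if k == k0 then -1 else c k) else 0)).
    by move=> k /negbTE ->.
  move=> l; rewrite (bigD1 k0) //= hk0 eqxx hc /s big_filter.
  have H0 : forall a b : R, a = b -> -1 * a + b = 0 by move=> a b ->; ring.
  apply: H0; rewrite [RHS]big_mkcond [LHS]big_mkcond; apply: eq_bigr => k _.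
  case: (act k); case: eqP => /= _; ring.
exists (fun l => / dot (W k0) d * d l); split.
  rewrite dot_scal_r; field; exact: hnz.
move=> k hk hne; rewrite dot_scal_r (hd k) ?Rmult_0_r //.
by rewrite mem_filter hk hne mem_index_enum.
Qed.

Lemma kkt_lin p (I : finType) (W : I -> Vec p) (act : pred I) (psi : I -> R -> R) (v : Vec p) rho :
  0 < rho -> (forall k, psi k 0 = 0) ->
  (forall d, 0 <= dot v d + rho * \big[Rplus/R0]_(k : I) (if act k then psi k (dot (W k) d) else 0)) ->
  LI_I W act ->
  exists c : I -> R, (forall k, ~~ act k -> c k = 0) /\
    (forall l, v l + \big[Rplus/R0]_(k : I) (c k * W k l) = 0) /\
    (forall k, act k -> c k <= rho * psi k 1 /\ - c k <= rho * psi k (-1)).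
Proof.
move=> hrho hpsi HD HLI.
set s := [seq k <- index_enum I | act k].
have us : uniq s by apply: filter_uniq; exact: index_enum_uniq.
have Aperp : forall d, (forall k, act k -> dot (W k) d = 0) ->
    \big[Rplus/R0]_(k : I) (if act k then psi k (dot (W k) d) else 0) = 0.
  move=> d hd; apply: big1 => k _; case hk: (act k) => //; by rewrite hd.
case: (span_or_perp W us v) => [[c hc] | [d [hd hnz]]]; last first.
  exfalso; apply: hnz.
  have hd' : forall k, act k -> dot (W k) d = 0.
    by move=> k hk; apply: hd; rewrite mem_filter hk mem_index_enum.
  have h1 := HD d; have h2 := HD (fun l => - d l).
  rewrite Aperp // in h1; rewrite Aperp in h2; last first.
    by move=> k hk; rewrite dot_neg_r hd' // Ropp_0.
  rewrite dot_neg_r in h2; lra.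
set c' := fun k => if act k then - c k else 0.
have hc'0 : forall k, ~~ act k -> c' k = 0 by move=> k /negbTE; rewrite /c' => ->.
have heq : forall l, v l + \big[Rplus/R0]_(k : I) (c' k * W k l) = 0.
  move=> l; rewrite hc /s big_filter big_mkcond -big_split /=.
  apply: big1 => k _; rewrite /c'; case: (act k); ring.
exists c'; split => //; split => //.
have hv : v = fun l => \big[Rplus/R0]_(k : I) ((- c' k) * W k l).
  apply: functional_extensionality => l; have := heq l.
  have -> : \big[Rplus/R0]_(k : I) ((- c' k) * W k l) = - \big[Rplus/R0]_(k : I) (c' k * W k l).
    rewrite -(Rmult_1_l (\big[Rplus/R0]_(k : I) (c' k * W k l))) Ropp_mult_distr_l big_distrr /=.
    apply: eq_bigr => k _; ring.
  lra.
move=> k0 hk0; have [d [hd1 hd2]] := dual_vec HLI hk0.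
have key : forall e q, dot (W k0) e = q -> (forall k, act k -> k != k0 -> dot (W k) e = 0) ->
    dot v e = - c' k0 * q /\
    \big[Rplus/R0]_(k : I) (if act k then psi k (dot (W k) e) else 0) = psi k0 q.
  move=> e q he1 he2; split.
    rewrite hv dot_vsum_seq (bigD1 k0) //= he1 big1 ?Rplus_0_r //.
    move=> k hk; case hak: (act k); first by rewrite he2 // Rmult_0_r.
    by rewrite hc'0 ?hak // Ropp_0 Rmult_0_l.
  rewrite (bigD1 k0) //= hk0 he1 big1 ?Rplus_0_r //.
  move=> k hk; case hak: (act k) => //; by rewrite he2.
have [k1 k2] := key d 1 hd1 hd2.
have [k3 k4] : dot v (fun l => - d l) = - c' k0 * -1 /\
    \big[Rplus/R0]_(k : I) (if act k then psi k (dot (W k) (fun l => - d l)) else 0) = psi k0 (-1).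
  apply: key; first by rewrite dot_neg_r hd1.
  by move=> k hk hne; rewrite dot_neg_r hd2 // Ropp_0.
have := HD d; have := HD (fun l => - d l); rewrite k1 k2 k3 k4; lra.
Qed.

Definition ek p (k : 'I_p) : Vec p := fun l => if l == k then 1 else 0.

Lemma vsub_step p (x d : Vec p) t : vsub (vadd x (vscale t d)) x = vscale t d.
Proof. apply: functional_extensionality => l; rewrite /vsub /vadd /vscale; ring. Qed.

Lemma dot_vscale p (a d : Vec p) t : dot a (vscale t d) = t * dot a d.
Proof. exact: dot_scal_r. Qed.

Lemma hg_dir p (H : Vec p -> R) x b d : has_gradient H x b ->
  forall eps, 0 < eps -> exists delta, 0 < delta /\ forall t, 0 < t < delta ->
    Rabs (H (vadd x (vscale t d)) - H x - t * dot b d) <= t * eps.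
Proof.
move=> Hg eps he.
set D := vnorm d; have hD : 0 <= D by exact: vnorm_ge0.
have he' : 0 < eps / (D + 1) by apply: Rdiv_lt_0_compat; lra.
have [d1 [hd1 Hd1]] := Hg _ he'.
exists (d1 / (D + 1)); split; first by apply: Rdiv_lt_0_compat; lra.
move=> t [ht0 ht1].
have hn : vnorm (vsub (vadd x (vscale t d)) x) = t * D.
  by rewrite vsub_step vnorm_scale Rabs_right //; lra.
have htD : t * (D + 1) < d1.
  have := Rmult_lt_compat_r (D + 1) _ _ ltac:(lra) ht1.
  by rewrite /Rdiv Rmult_assoc Rinv_l ?Rmult_1_r //; lra.
have hlt : vnorm (vsub (vadd x (vscale t d)) x) < d1 by rewrite hn; nra.
have := Hd1 (vadd x (vscale t d)) hlt.
rewrite vsub_step dot_vscale vnorm_scale (Rabs_right t); last lra.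
move=> h; apply: Rle_trans h _; rewrite -/D.
have : eps / (D + 1) * D <= eps.
  rewrite /Rdiv Rmult_assoc; rewrite -{2}(Rmult_1_r eps); apply: Rmult_le_compat_l; first lra.
  apply: (Rmult_le_reg_l (D + 1)); first lra.
  rewrite -Rmult_assoc Rinv_r; lra.
have : 0 <= eps / (D + 1) by lra.
nra.
Qed.

Definition md (y q : R) : R :=
  if Rlt_dec 0 y then q else if Rlt_dec y 0 then 0 else Rmax 0 q.

Lemma max_step y q r t eps : 0 < t -> 0 < eps -> Rabs r <= t * eps ->
  (y <> 0 -> t * (Rabs q + eps) < Rabs y) ->
  Rmax 0 (y + t * q + r) - Rmax 0 y <= t * md y q + t * eps.
Proof.
move=> ht he hr hy.
have hr' := Rabs_le_inv' hr.
have hq0 := Rabs_le_inv' (Rle_refl (Rabs q)).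
have hq : - (t * Rabs q) <= t * q <= t * Rabs q by split; nra.
have hs1 : 0 <= q -> 0 <= t * q by move=> *; nra.
have hs2 : q < 0 -> t * q < 0 by move=> *; nra.
have hRm : t * Rmax 0 q = Rmax 0 (t * q).
  rewrite /Rmax; case: Rle_dec => h; case: Rle_dec => h'; try nra.
rewrite /md; case: Rlt_dec => h1 /=.
  have := hy ltac:(lra); rewrite Rmult_plus_distr_l (Rabs_right y); last lra.
  move: hq hr'; set tq := t * q; set ta := t * Rabs q; set te := t * eps.
  rewrite /Rmax; repeat case: Rle_dec; intros; lra.
case: Rlt_dec => h2 /=.
  have := hy ltac:(lra); rewrite Rmult_plus_distr_l (Rabs_left y); last lra.
  move: hq hr'; set tq := t * q; set ta := t * Rabs q; set te := t * eps.
  rewrite Rmult_0_r; rewrite /Rmax; repeat case: Rle_dec; intros; lra.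
have -> : y = 0 by lra.
rewrite hRm; move: hq hr' hs1 hs2; set tq := t * q; set te := t * eps.
rewrite /Rmax; case: (Rle_dec 0 q) => hq'; repeat case: Rle_dec; intros; try lra.
Qed.

Lemma maxdir p (H : Vec p -> R) x b d : has_gradient H x b ->
  forall eps, 0 < eps -> exists delta, 0 < delta /\ forall t, 0 < t < delta ->
    Rmax 0 (H (vadd x (vscale t d))) - Rmax 0 (H x) <= t * md (H x) (dot b d) + t * eps.
Proof.
move=> Hg eps he; have [d1 [hd1 Hd1]] := hg_dir d Hg he.
set q := dot b d.
case: (Req_dec (H x) 0) => hx.
  exists d1; split => // t ht.
  have := max_step (y := H x) (q := q) (r := H (vadd x (vscale t d)) - H x - t * q) (proj1 ht) he (Hd1 t ht).
  have -> : H x + t * q + (H (vadd x (vscale t d)) - H x - t * q) = H (vadd x (vscale t d)) by ring.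
  by apply => /(_ hx).
have hpos : 0 < Rabs (H x) / (Rabs q + eps).
  apply: Rdiv_lt_0_compat; first exact: Rabs_pos_lt.
  have := Rabs_pos q; lra.
exists (Rmin d1 (Rabs (H x) / (Rabs q + eps))); split; first exact: Rmin_pos.
move=> t [ht0 ht1].
have ht : 0 < t < d1 by split => //; apply: Rlt_le_trans ht1 (Rmin_l _ _).
have := max_step (y := H x) (q := q) (r := H (vadd x (vscale t d)) - H x - t * q) ht0 he (Hd1 t ht).
have -> : H x + t * q + (H (vadd x (vscale t d)) - H x - t * q) = H (vadd x (vscale t d)) by ring.
apply => _.
have h2 : t < Rabs (H x) / (Rabs q + eps) by apply: Rlt_le_trans ht1 (Rmin_r _ _).
have hq : 0 < Rabs q + eps by have := Rabs_pos q; lra.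
have := Rmult_lt_compat_r _ _ _ hq h2.
by rewrite /Rdiv Rmult_assoc Rinv_l ?Rmult_1_r //; lra.
Qed.

Lemma hg_opp p (H : Vec p -> R) x b : has_gradient H x b ->
  has_gradient (fun y => - H y) x (fun l => - b l).
Proof.
move=> Hg eps he; have [d1 [hd1 Hd1]] := Hg eps he; exists d1; split => // y hy.
have -> : dot (fun l => - b l) (vsub y x) = - dot b (vsub y x).
  rewrite /dot -vsum_opp; apply: vsum_ext => l; ring.
have -> : - H y - - H x - - dot b (vsub y x) = - (H y - H x - dot b (vsub y x)) by ring.
rewrite Rabs_Ropp; exact: Hd1.
Qed.

Lemma fin_delta n (Q : 'I_n -> R -> Prop) :
  (forall i, exists delta, 0 < delta /\ forall t, 0 < t < delta -> Q i t) ->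
  exists delta, 0 < delta /\ forall i t, 0 < t < delta -> Q i t.
Proof.
move=> H.
have [dl hdl] : exists dl : 'I_n -> R, forall i, 0 < dl i /\ forall t, 0 < t < dl i -> Q i t.
  exists (fun i => proj1_sig (constructive_indefinite_description _ (H i))).
  move=> i; exact: proj2_sig (constructive_indefinite_description _ (H i)).
have key : forall s : seq 'I_n, 0 < foldr Rmin 1 (map dl s) /\
    forall i, i \in s -> foldr Rmin 1 (map dl s) <= dl i.
  elim=> [|a s [IH1 IH2]] /=; first by split => //; lra.
  split; first by apply: Rmin_pos => //; exact: (proj1 (hdl a)).
  move=> i; rewrite inE => /orP [/eqP -> | hi]; first exact: Rmin_l.
  apply: Rle_trans (Rmin_r _ _) (IH2 i hi).
have [k1 k2] := key (enum 'I_n).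
exists (foldr Rmin 1 (map dl (enum 'I_n))); split => // i t [ht0 ht1].
apply: (proj2 (hdl i)); split => //; apply: Rlt_le_trans ht1 _; apply: k2; by rewrite mem_enum.
Qed.

Lemma Rabs_max2 u : Rabs u = Rmax 0 u + Rmax 0 (- u).
Proof. rewrite /Rmax /Rabs; repeat case: Rle_dec; case: Rcase_abs; intros; lra. Qed.

Lemma dot_neg_l p (a d : Vec p) : dot (fun l => - a l) d = - dot a d.
Proof. rewrite /dot -vsum_opp; apply: vsum_ext => l; ring. Qed.

Lemma dir_nonneg p nr ns (f : Vec p -> R) (g : 'I_nr -> Vec p -> R) (h : 'I_ns -> Vec p -> R)
  rho x gf (ga : 'I_nr -> Vec p) (hb : 'I_ns -> Vec p) :
  0 <= rho -> minimizer (Epen f g h rho) x -> has_gradient f x gf ->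
  (forall i, has_gradient (g i) x (ga i)) -> (forall j, has_gradient (h j) x (hb j)) ->
  forall d, 0 <= dot gf d
     + rho * vsum (fun i => md (g i x) (dot (ga i) d) + md (- g i x) (- dot (ga i) d))
     + rho * vsum (fun j => md (h j x) (dot (hb j) d)).
Proof.
move=> hrho hmin hf hg hh d.
set C1 := vsum (fun i => md (g i x) (dot (ga i) d) + md (- g i x) (- dot (ga i) d)).
set C2 := vsum (fun j => md (h j x) (dot (hb j) d)).
set Dd := dot gf d + rho * C1 + rho * C2.
set S2 := vsum (fun _ : 'I_nr => 2); set S1 := vsum (fun _ : 'I_ns => 1).
have hS2 : 0 <= S2 by apply: vsum_ge0 => _; lra.
have hS1 : 0 <= S1 by apply: vsum_ge0 => _; lra.
set K := 1 + rho * S2 + rho * S1.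
have hK : 0 < K by rewrite /K; have := Rmult_le_pos _ _ hrho hS2; have := Rmult_le_pos _ _ hrho hS1; lra.
suff H : forall eps, 0 < eps -> 0 <= Dd + eps * K.
  apply: Rnot_lt_le => hneg.
  have he : 0 < - Dd / (2 * K) by apply: Rdiv_lt_0_compat; lra.
  have := H _ he.
  have -> : - Dd / (2 * K) * K = - Dd / 2 by field; lra.
  lra.
move=> eps he.
pose y t := vadd x (vscale t d).
have [df [hdf Hf]] := hg_dir d hf he.
have [dg [hdg Hg]] : exists delta, 0 < delta /\ forall i t, 0 < t < delta ->
   Rabs (g i (y t)) - Rabs (g i x) <= t * (md (g i x) (dot (ga i) d) + md (- g i x) (- dot (ga i) d)) + t * (2 * eps).
  apply: (fin_delta (Q := fun i t => Rabs (g i (y t)) - Rabs (g i x) <=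
     t * (md (g i x) (dot (ga i) d) + md (- g i x) (- dot (ga i) d)) + t * (2 * eps))) => i.
  have [d1 [hd1 H1]] := maxdir d (hg i) he.
  have [d2 [hd2 H2]] := maxdir d (hg_opp (hg i)) he.
  exists (Rmin d1 d2); split; first exact: Rmin_pos.
  move=> t [ht0 ht1].
  have := H1 t (conj ht0 (Rlt_le_trans _ _ _ ht1 (Rmin_l _ _))).
  have := H2 t (conj ht0 (Rlt_le_trans _ _ _ ht1 (Rmin_r _ _))).
  rewrite dot_neg_l !(Rabs_max2 (g i _)) /y; lra.
have [dh [hdh Hh]] := fin_delta (Q := fun j t => Rmax 0 (h j (y t)) - Rmax 0 (h j x) <=
   t * md (h j x) (dot (hb j) d) + t * eps) (fun j => maxdir d (hh j) he).
set t := Rmin df (Rmin dg dh) / 2.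
have hpos : 0 < Rmin df (Rmin dg dh) by apply: Rmin_pos => //; exact: Rmin_pos.
have ht0 : 0 < t by rewrite /t; lra.
have m1 := Rmin_l df (Rmin dg dh); have m2 := Rmin_r df (Rmin dg dh).
have m3 := Rmin_l dg dh; have m4 := Rmin_r dg dh.
have htf : t < df by rewrite /t; lra.
have htg : t < dg by rewrite /t; lra.
have hth : t < dh by rewrite /t; lra.
have Ef := Rabs_le_inv' (Hf t (conj ht0 htf)).
have Eg : vsum (fun i => Rabs (g i (y t))) - vsum (fun i => Rabs (g i x)) <= t * C1 + t * (eps * S2).
  rewrite -vsum_sub; apply: Rle_trans (vsum_le (fun i => Hg i t (conj ht0 htg))) _.
  apply: Req_le; rewrite vsum_add; congr (_ + _); first exact: vsum_scal.
  rewrite /S2 -!vsum_scal; apply: vsum_ext => _; ring.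
have Eh : vsum (fun j => Rmax 0 (h j (y t))) - vsum (fun j => Rmax 0 (h j x)) <= t * C2 + t * (eps * S1).
  rewrite -vsum_sub; apply: Rle_trans (vsum_le (fun j => Hh j t (conj ht0 hth))) _.
  apply: Req_le; rewrite vsum_add; congr (_ + _); first exact: vsum_scal.
  rewrite /S1 -!vsum_scal; apply: vsum_ext => _; ring.
have Eg' := Rmult_le_compat_l _ _ _ hrho Eg.
have Eh' := Rmult_le_compat_l _ _ _ hrho Eh.
have hm := hmin (y t); rewrite /Epen in hm.
have : 0 <= t * (Dd + eps * K).
  rewrite /Dd /K; move: Ef Eg' Eh' hm; rewrite /y.
  set A1 := vsum (fun i => Rabs (g i (vadd x (vscale t d)))).
  set A2 := vsum (fun j => Rmax 0 (h j (vadd x (vscale t d)))).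
  set B1 := vsum (fun i => Rabs (g i x)).
  set B2 := vsum (fun j => Rmax 0 (h j x)).
  intros; nra.
move=> hh2; apply: (Rmult_le_reg_l t); first exact: ht0.
by rewrite Rmult_0_r.
Qed.

Lemma vnorm_ek p (k : 'I_p) : vnorm (ek k) = 1.
Proof.
rewrite /vnorm /dot (vsum_single (k := k)); first by rewrite /ek eqxx Rmult_1_l sqrt_1.
by move=> i /eqP hik; rewrite /ek (negbTE hik) Rmult_0_l.
Qed.
Lemma dot_ek p (a : Vec p) k : dot a (ek k) = a k.
Proof.
rewrite /dot (vsum_single (k := k)); first by rewrite /ek eqxx Rmult_1_r.
by move=> i /eqP hik; rewrite /ek (negbTE hik) Rmult_0_r.
Qed.

Lemma has_gradient_unique p (F : Vec p -> R) x a b :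
  has_gradient F x a -> has_gradient F x b -> a = b.
Proof.
move=> Ha Hb; apply: functional_extensionality => k.
apply: NNPP => hne.
set e := Rabs (a k - b k) / 4.
have he : 0 < e by apply: Rdiv_lt_0_compat; [apply: Rabs_pos_lt; lra | lra].
have [d1 [hd1 H1]] := hg_dir (ek k) Ha he.
have [d2 [hd2 H2]] := hg_dir (ek k) Hb he.
set t := Rmin d1 d2 / 2.
have hm : 0 < Rmin d1 d2 by exact: Rmin_pos.
have m1 := Rmin_l d1 d2; have m2 := Rmin_r d1 d2.
have := H1 t ltac:(rewrite /t; lra); have := H2 t ltac:(rewrite /t; lra).
rewrite !dot_ek => h2 h1.
have h3 := Rabs_triang (F (vadd x (vscale t (ek k))) - F x - t * b k)
   (- (F (vadd x (vscale t (ek k))) - F x - t * a k)).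
rewrite Rabs_Ropp in h3.
have E3 : F (vadd x (vscale t (ek k))) - F x - t * b k + - (F (vadd x (vscale t (ek k))) - F x - t * a k)
  = t * (a k - b k) by ring.
rewrite E3 in h3.
rewrite Rabs_mult (Rabs_right t) in h3; last by rewrite /t; lra.
have ht : 0 < t by rewrite /t; lra.
have : t * Rabs (a k - b k) <= t * (2 * e) by lra.
rewrite /e => h4; have := Rmult_le_reg_l _ _ _ ht h4.
have := Rabs_pos_lt (a k - b k) ltac:(lra); lra.
Qed.

Lemma grad_eq p (F : Vec p -> R) x a : has_gradient F x a -> grad F x = a.
Proof.
move=> Ha; apply: (has_gradient_unique (F := F) (x := x)) => //.
rewrite /grad; apply: epsilon_spec; by exists a.
Qed.
Lemma grad_spec p (F : Vec p -> R) x a : has_gradient F x a -> has_gradient F x (grad F x).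
Proof. by move=> Ha; rewrite (grad_eq Ha). Qed.

Lemma C2_grad p (F : Vec p -> R) : C2 F -> forall x, has_gradient F x (grad F x).
Proof. move=> [G [H [h1 _]]] x; exact: grad_spec (h1 x). Qed.
Lemma affine_hgrad p (F : Vec p -> R) : affine F -> forall x, has_gradient F x (grad F x).
Proof. move=> [a [b hab]] x; exact: grad_spec (affine_grad hab x). Qed.

Definition sgn3 (y : R) : R := if Rlt_dec 0 y then 1 else if Rlt_dec y 0 then -1 else 0.
Definition sgn1 (y : R) : R := if Rlt_dec 0 y then 1 else 0.

Lemma md_g y q : md y q + md (- y) (- q) = sgn3 y * q + (if y == 0 then Rabs q else 0).
Proof.
rewrite /md /sgn3; case: eqP => hy.
  rewrite hy; repeat case: Rlt_dec => /=; intros; try lra.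
  rewrite Rabs_max2; ring.
repeat case: Rlt_dec => /=; intros; try lra; ring.
Qed.
Lemma md_h y q : md y q = sgn1 y * q + (if y == 0 then Rmax 0 q else 0).
Proof.
rewrite /md /sgn1; case: eqP => hy.
  rewrite hy; repeat case: Rlt_dec => /=; intros; try lra; ring.
repeat case: Rlt_dec => /=; intros; try lra; ring.
Qed.

Lemma le_div a b r : 0 < r -> b * r <= a -> b <= a / r.
Proof. move=> hr h; apply: (Rmult_le_reg_r r) => //; rewrite /Rdiv Rmult_assoc Rinv_l; lra. Qed.
Lemma div_le a b r : 0 < r -> a <= b * r -> a / r <= b.
Proof. move=> hr h; apply: (Rmult_le_reg_r r) => //; rewrite /Rdiv Rmult_assoc Rinv_l; lra. Qed.

Lemma dot_addl p (a b d : Vec p) : dot (fun l => a l + b l) d = dot a d + dot b d.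
Proof. rewrite /dot -vsum_add; apply: vsum_ext => l; ring. Qed.
Lemma dot_scal_l p (a d : Vec p) r : dot (fun l => r * a l) d = r * dot a d.
Proof. rewrite /dot -vsum_scal; apply: vsum_ext => l; ring. Qed.
Lemma dot_vsum p n (c : 'I_n -> R) (w : 'I_n -> Vec p) d :
  dot (fun l => vsum (fun i => c i * w i l)) d = vsum (fun i => c i * dot (w i) d).
Proof. exact: dot_vsum_seq. Qed.

Lemma kkt_exists p nr ns (f : Vec p -> R) (g : 'I_nr -> Vec p -> R) (h : 'I_ns -> Vec p -> R) rho x :
  0 < rho -> minimizer (Epen f g h rho) x ->
  has_gradient f x (grad f x) -> (forall i, has_gradient (g i) x (grad (g i) x)) ->
  (forall j, has_gradient (h j) x (grad (h j) x)) ->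
  active_lin_indep g h x -> exists s t, opt_cond f g h rho x s t.
Proof.
move=> hrho hmin hf hg hh HLI.
pose W : ('I_nr + 'I_ns)%type -> Vec p :=
  fun k => match k with inl i => grad (g i) x | inr j => grad (h j) x end.
pose act : pred ('I_nr + 'I_ns)%type :=
  fun k => match k with inl i => g i x == 0 | inr j => h j x == 0 end.
pose psi : ('I_nr + 'I_ns)%type -> R -> R :=
  fun k q => match k with inl _ => Rabs q | inr _ => Rmax 0 q end.
pose v : Vec p := fun l => grad f x l + rho * vsum (fun i => sgn3 (g i x) * grad (g i) x l)
                     + rho * vsum (fun j => sgn1 (h j x) * grad (h j) x l).
have HD : forall d, 0 <= dot v d +
    rho * \big[Rplus/R0]_(k : ('I_nr + 'I_ns)%type) (if act k then psi k (dot (W k) d) else 0).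
  move=> d; have := dir_nonneg (Rlt_le _ _ hrho) hmin hf hg hh d.
  rewrite (vsum_ext (fun i => md_g _ _)) (vsum_ext (fun j => md_h _ _)) !vsum_add.
  rewrite big_sumType /= /v !dot_addl !dot_scal_l !dot_vsum.
  set X1 := vsum (fun i => sgn3 (g i x) * dot (grad (g i) x) d).
  set X2 := vsum (fun j => sgn1 (h j x) * dot (grad (h j) x) d).
  set Y1 := vsum (fun i => if g i x == 0 then Rabs (dot (grad (g i) x) d) else 0).
  set Y2 := vsum (fun j => if h j x == 0 then Rmax 0 (dot (grad (h j) x) d) else 0).
  have -> : \big[Rplus/R0]_(i < nr) (if g i x == 0 then Rabs (dot (grad (g i) x) d) else 0) = Y1 by [].
  have -> : \big[Rplus/R0]_(i < ns) (if h i x == 0 then Rmax 0 (dot (grad (h i) x) d) else 0) = Y2 by [].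
  lra.
have HLI' : LI_I W act.
  move=> c hc0 hc k.
  have [Ha Hb] : (forall i, c (inl i) = 0) /\ (forall j, c (inr j) = 0).
    apply: (HLI (fun i => c (inl i)) (fun j => c (inr j))).
  - move=> i hi; apply: hc0 => /=; apply/eqP; exact: hi.
  - move=> j hj; apply: hc0 => /=; apply/eqP; exact: hj.
  - move=> l; move: (hc l); rewrite big_sumType /=; exact.
  by case: k.
have psi0 : forall k, psi k 0 = 0.
  by case=> ? /=; [exact: Rabs_R0 | rewrite /Rmax; case: Rle_dec; lra].
have [c [hc0 [heq hbd]]] := kkt_lin hrho psi0 HD HLI'.
exists (fun i => sgn3 (g i x) + c (inl i) / rho), (fun j => sgn1 (h j x) + c (inr j) / rho).
split; [|split].
- move=> l; have := heq l; rewrite big_sumType /= /v.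
  have E1 : rho * vsum (fun i => (sgn3 (g i x) + c (inl i) / rho) * grad (g i) x l)
     = rho * vsum (fun i => sgn3 (g i x) * grad (g i) x l) + vsum (fun i => c (inl i) * grad (g i) x l).
    rewrite -vsum_scal -vsum_scal -vsum_add; apply: vsum_ext => i; field; lra.
  have E2 : rho * vsum (fun j => (sgn1 (h j x) + c (inr j) / rho) * grad (h j) x l)
     = rho * vsum (fun j => sgn1 (h j x) * grad (h j) x l) + vsum (fun j => c (inr j) * grad (h j) x l).
    rewrite -vsum_scal -vsum_scal -vsum_add; apply: vsum_ext => j; field; lra.
  rewrite E1 E2.
  have -> : \big[Rplus/R0]_(i < nr) (c (inl i) * grad (g i) x l) = vsum (fun i => c (inl i) * grad (g i) x l) by [].
  have -> : \big[Rplus/R0]_(i < ns) (c (inr i) * grad (h i) x l) = vsum (fun j => c (inr j) * grad (h j) x l) by [].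
  lra.
- move=> i; rewrite /sgn3; split; [|split].
  + move=> hlt; rewrite hc0; last by apply/eqP; lra.
    case: Rlt_dec => h1 /=; first lra.
    case: Rlt_dec => h2 /=; last lra.
    rewrite /Rdiv Rmult_0_l; ring.
  + move=> h0; have [b1 b2] := hbd (inl i) ltac:(by apply/eqP).
    rewrite /= Rabs_R1 Rabs_Ropp Rabs_R1 in b1 b2.
    case: Rlt_dec => h1 /=; first lra.
    case: Rlt_dec => h2 /=; first lra.
    rewrite Rplus_0_l; split; [apply: le_div | apply: div_le]; lra.
  + move=> hgt; rewrite hc0; last by apply/eqP; lra.
    case: Rlt_dec => h1 /=; last lra.
    rewrite /Rdiv Rmult_0_l; ring.
- move=> j; rewrite /sgn1; split; [|split].
  + move=> hlt; rewrite hc0; last by apply/eqP; lra.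
    case: Rlt_dec => h1 /=; first lra.
    rewrite /Rdiv Rmult_0_l; ring.
  + move=> h0; have [b1 b2] := hbd (inr j) ltac:(by apply/eqP).
    have e1 : Rmax 0 1 = 1 by rewrite /Rmax; case: Rle_dec; lra.
    have e2 : Rmax 0 (-1) = 0 by rewrite /Rmax; case: Rle_dec; lra.
    rewrite /= e1 e2 in b1 b2.
    case: Rlt_dec => h1 /=; first lra.
    rewrite Rplus_0_l; split; [apply: le_div | apply: div_le]; lra.
  + move=> hgt; rewrite hc0; last by apply/eqP; lra.
    case: Rlt_dec => h1 /=; last lra.
    rewrite /Rdiv Rmult_0_l; ring.
Qed.

Lemma C2_gradcont p (F : Vec p -> R) : C2 F -> forall l, seqcont (fun y => grad F y l).
Proof.
move=> [G [H [h1 [h2 _]]]] l y x hy.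
have E : forall z, grad F z l = G z l by move=> z; rewrite (grad_eq (h1 z)).
apply: (Un_cv_ext (u := fun n => G (y n) l)); first by move=> n; rewrite E.
rewrite E; exact: (hg_cont (h2 x l) hy).
Qed.
Lemma affine_gradcont p (F : Vec p -> R) : affine F -> forall l, seqcont (fun y => grad F y l).
Proof.
move=> [a [b hab]] l y x hy.
have E : forall z, grad F z l = a l by move=> z; rewrite (grad_eq (affine_grad hab z)).
apply: (Un_cv_ext (u := fun _ => a l)); first by move=> n; rewrite E.
rewrite E; exact: CV_const.
Qed.

Lemma opt_bounds p nr ns (f : Vec p -> R) (g : 'I_nr -> Vec p -> R) (h : 'I_ns -> Vec p -> R) rho x s t :
  opt_cond f g h rho x s t -> (forall i, -1 <= s i <= 1) /\ (forall j, 0 <= t j <= 1).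
Proof.
move=> [_ [Hs Ht]]; split.
  move=> i; have [a [b c]] := Hs i; case: (Rtotal_order (g i x) 0) => [h1|[h2|h3]].
  - rewrite a //; lra.
  - exact: b.
  - rewrite c //; lra.
move=> j; have [a [b c]] := Ht j; case: (Rtotal_order (h j x) 0) => [h1|[h2|h3]].
- rewrite a //; lra.
- exact: b.
- rewrite c //; lra.
Qed.

Lemma coef_unique p nr ns (f : Vec p -> R) (g : 'I_nr -> Vec p -> R) (h : 'I_ns -> Vec p -> R) rho x s t s' t' :
  0 < rho -> active_lin_indep g h x -> opt_cond f g h rho x s t -> opt_cond f g h rho x s' t' ->
  (forall i, s' i = s i) /\ (forall j, t' j = t j).
Proof.
move=> hrho HLI [E1 [S1 T1]] [E2 [S2 T2]].
have [Ha Hb] : (forall i, s' i - s i = 0) /\ (forall j, t' j - t j = 0).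
  apply: (HLI (fun i => s' i - s i) (fun j => t' j - t j)).
  - move=> i hi; have [a1 [_ c1]] := S1 i; have [a2 [_ c2]] := S2 i.
    case: (Rtotal_order (g i x) 0) => [h1|[h2|h3]].
    + rewrite a1 // a2 //; ring.
    + by exfalso.
    + rewrite c1 // c2 //; ring.
  - move=> j hj; have [a1 [_ c1]] := T1 j; have [a2 [_ c2]] := T2 j.
    case: (Rtotal_order (h j x) 0) => [h1|[h2|h3]].
    + rewrite a1 // a2 //; ring.
    + by exfalso.
    + rewrite c1 // c2 //; ring.
  - move=> l; have := E1 l; have := E2 l.
    move=> e2 e1.
    have A : vsum (fun i => (s' i - s i) * grad (g i) x l) = vsum (fun i => s' i * grad (g i) x l) - vsum (fun i => s i * grad (g i) x l).
      rewrite -vsum_sub; apply: vsum_ext => i; ring.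
    have B : vsum (fun j => (t' j - t j) * grad (h j) x l) = vsum (fun j => t' j * grad (h j) x l) - vsum (fun j => t j * grad (h j) x l).
      rewrite -vsum_sub; apply: vsum_ext => j; ring.
    rewrite A B; apply: (Rmult_eq_reg_l rho); last lra.
    rewrite Rmult_0_r; lra.
split => [i|j]; [have := Ha i | have := Hb j]; lra.
Qed.

Lemma seq_pick_cv (r : nat -> R) rho0 : (forall n, Rabs (r n - rho0) < / INR (S n)) -> Un_cv r rho0.
Proof.
move=> hr eps he; have [N HN] := cv_inv_S he; exists N => n hn.
have := HN n hn; rewrite /R_dist Rminus_0_r => h3.
apply: Rlt_trans (hr n) _; apply: Rle_lt_trans (Rle_abs _) h3.
Qed.

Lemma subseq_cont (F : R -> R) (J : R -> Prop) rho0 :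
  (forall rn, (forall n, J (rn n)) -> Un_cv rn rho0 ->
     exists psi, incr psi /\ Un_cv (fun n => F (rn (psi n))) (F rho0)) ->
  forall eps, 0 < eps -> exists delta, 0 < delta /\
    forall rho, J rho -> Rabs (rho - rho0) < delta -> Rabs (F rho - F rho0) < eps.
Proof.
move=> H eps he; apply: NNPP => Hn.
have H1 : forall n, exists rho, J rho /\ Rabs (rho - rho0) < / INR (S n) /\ eps <= Rabs (F rho - F rho0).
  move=> n; apply: NNPP => h2; apply: Hn; exists (/ INR (S n)); split.
    apply: Rinv_0_lt_compat; apply: lt_0_INR; lia.
  move=> rho hJ hr; apply: Rnot_le_lt => h3; apply: h2; exists rho; split => //.
have [r hr] := choice_nat H1.
have hrc : Un_cv r rho0 by apply: seq_pick_cv => n; exact: (proj1 (proj2 (hr n))).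
have [psi [hp hc]] := H r (fun n => proj1 (hr n)) hrc.
have [N HN] := hc eps he; have := HN N (le_n N); rewrite /R_dist => h5.
exact: (Rlt_not_le _ _ h5 (proj2 (proj2 (hr (psi N))))).
Qed.

Lemma cv_ev_neg u a : Un_cv u a -> a < 0 -> exists N, forall n, (n >= N)%coq_nat -> u n < 0.
Proof.
move=> H ha; have [N HN] := H (- a) ltac:(lra); exists N => n hn; have := HN n hn.
rewrite /R_dist /Rabs; case: Rcase_abs; lra.
Qed.
Lemma cv_ev_pos u a : Un_cv u a -> 0 < a -> exists N, forall n, (n >= N)%coq_nat -> 0 < u n.
Proof.
move=> H ha; have [N HN] := H a ha; exists N => n hn; have := HN n hn.
rewrite /R_dist /Rabs; case: Rcase_abs; lra.
Qed.
Lemma cv_ev_const u a c : Un_cv u a -> (exists N, forall n, (n >= N)%coq_nat -> u n = c) -> a = c.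
Proof.
move=> H [N HN]; apply: (UL_sequence u) => // eps he; exists N => n hn.
rewrite HN // /R_dist Rminus_eq_0 Rabs_R0; lra.
Qed.
Lemma cv_bounds u a lo hi : Un_cv u a -> (forall n, lo <= u n <= hi) -> lo <= a <= hi.
Proof.
move=> H hb; split.
  exact: (Rle_cv_lim (fun n => proj1 (hb n)) (CV_const lo) H).
exact: (Rle_cv_lim (fun n => proj2 (hb n)) H (CV_const hi)).
Qed.

Lemma J_pos (J : R -> Prop) rho : is_open_interval J -> (forall r, J r -> 0 <= r) -> J rho -> 0 < rho.
Proof.
move=> HJ Hn hr; have [e [he He]] := open_int_nbhd HJ hr.
have : J (rho - e / 2) by apply: He; rewrite Rabs_left; lra.
move/Hn; lra.
Qed.

Lemma part3_sub p nr ns (f : Vec p -> R) (g : 'I_nr -> Vec p -> R) (h : 'I_ns -> Vec p -> R)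
  (Hf_C2 : C2 f) (Hg_aff : forall i, affine (g i)) (Hh_C2 : forall j, C2 (h j))
  rho0 (J : R -> Prop) :
  0 < rho0 -> is_open_interval J -> J rho0 ->
  (forall rho, J rho -> strictly_convex (Epen f g h rho) /\ coercive (Epen f g h rho)) ->
  (forall rho x, J rho -> minimizer (Epen f g h rho) x -> active_lin_indep g h x) ->
  forall (sc : R -> 'I_nr -> R) (tc : R -> 'I_ns -> R),
  (forall rho, J rho -> opt_cond f g h rho (xmin f g h rho) (sc rho) (tc rho)) ->
  forall rn, (forall n, J (rn n)) -> Un_cv rn rho0 ->
  exists psi, incr psi /\ (forall i, Un_cv (fun n => sc (rn (psi n)) i) (sc rho0 i)) /\
                         (forall j, Un_cv (fun n => tc (rn (psi n)) j) (tc rho0 j)).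
Proof.
move=> hr0 HJ J0 HSC HLI sc tc Hopt rn hJn hrn.
have Hf := C2_seqcont Hf_C2.
have Hg : forall i, seqcont (g i) by move=> i; exact: affine_seqcont.
have Hh : forall j, seqcont (h j) by move=> j; exact: C2_seqcont.
have [P2a P2b] := part2 Hf Hg Hh HJ J0 HSC.
set xm := xmin f g h; set x0 := xm rho0.
have hx : Un_cv (fun n => vnorm (vsub (xm (rn n)) x0)) 0.
  move=> eps he; have [d [hd Hd]] := P2b eps he; have [N HN] := hrn d hd.
  exists N => n hn; rewrite /R_dist Rminus_0_r Rabs_right; last by apply: Rle_ge; exact: vnorm_ge0.
  exact: Hd (hJn n) (HN n hn).
have [bs bt] : (forall n i, Rabs (sc (rn n) i) <= 1) /\ (forall n j, Rabs (tc (rn n) j) <= 1).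
  split => n k; have [b1 b2] := opt_bounds (Hopt _ (hJn n)); apply: Rabs_le.
    have := b1 k; lra.
  have := b2 k; lra.
have [phi1 [S [hp1 hS1]]] := BWvec (u := fun n => sc (rn n)) (bs).
have [phi2 [T [hp2 hT2]]] := BWvec (u := fun n => tc (rn (phi1 n))) (fun n => bt (phi1 n)).
set psi := fun n => phi1 (phi2 n).
have hp : incr psi := incr_comp hp1 hp2.
have hS : forall i, Un_cv (fun n => sc (rn (psi n)) i) (S i).
  move=> i; exact: (CV_sub (u := fun n => sc (rn (phi1 n)) i) hp2 (hS1 i)).
have hT : forall j, Un_cv (fun n => tc (rn (psi n)) j) (T j) by move=> j; exact: hT2.
have hxp : Un_cv (fun n => vnorm (vsub (xm (rn (psi n))) x0)) 0 := CV_sub hp hx.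
have hrp : Un_cv (fun n => rn (psi n)) rho0 := CV_sub hp hrn.
have hmin0 : minimizer (Epen f g h rho0) x0 := proj1 (P2a rho0 J0).
have HoptST : opt_cond f g h rho0 x0 S T.
  split; [|split].
  - move=> l.
    pose z n := grad f (xm (rn (psi n))) l
        + rn (psi n) * vsum (fun i => sc (rn (psi n)) i * grad (g i) (xm (rn (psi n))) l)
        + rn (psi n) * vsum (fun j => tc (rn (psi n)) j * grad (h j) (xm (rn (psi n))) l).
    have hz0 : Un_cv z 0.
      apply: (Un_cv_ext (u := fun _ => 0)); last exact: CV_const.
      move=> n; rewrite /z; exact: (esym ((proj1 (Hopt _ (hJn (psi n)))) l)).
    apply: (UL_sequence z) hz0.
    apply: CV_plus; first apply: CV_plus.
    + exact: (C2_gradcont Hf_C2 l hxp).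
    + apply: CV_mult => //.
      apply: (CV_vsum (u := fun i n => sc (rn (psi n)) i * grad (g i) (xm (rn (psi n))) l)) => i.
      apply: CV_mult => //; exact: (affine_gradcont (Hg_aff i) l hxp).
    + apply: CV_mult => //.
      apply: (CV_vsum (u := fun j n => tc (rn (psi n)) j * grad (h j) (xm (rn (psi n))) l)) => j.
      apply: CV_mult => //; exact: (C2_gradcont (Hh_C2 j) l hxp).
  - move=> i; have hgc := Hg i _ _ hxp; split; [|split].
    + move=> hneg; apply: (cv_ev_const (hS i)).
      have [N HN] := cv_ev_neg hgc hneg; exists N => n hn.
      exact: (proj1 ((proj1 (proj2 (Hopt _ (hJn (psi n))))) i) (HN n hn)).
    + move=> _; apply: (cv_bounds (hS i)) => n.
      exact: (proj1 (opt_bounds (Hopt _ (hJn (psi n)))) i).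
    + move=> hpos; apply: (cv_ev_const (hS i)).
      have [N HN] := cv_ev_pos hgc hpos; exists N => n hn.
      exact: (proj2 (proj2 ((proj1 (proj2 (Hopt _ (hJn (psi n))))) i)) (HN n hn)).
  - move=> j; have hhc := Hh j _ _ hxp; split; [|split].
    + move=> hneg; apply: (cv_ev_const (hT j)).
      have [N HN] := cv_ev_neg hhc hneg; exists N => n hn.
      exact: (proj1 ((proj2 (proj2 (Hopt _ (hJn (psi n))))) j) (HN n hn)).
    + move=> _; apply: (cv_bounds (hT j)) => n.
      exact: (proj2 (opt_bounds (Hopt _ (hJn (psi n)))) j).
    + move=> hpos; apply: (cv_ev_const (hT j)).
      have [N HN] := cv_ev_pos hhc hpos; exists N => n hn.
      exact: (proj2 (proj2 ((proj2 (proj2 (Hopt _ (hJn (psi n))))) j)) (HN n hn)).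
have [eS eT] := coef_unique hr0 (HLI rho0 x0 J0 hmin0) (Hopt rho0 J0) HoptST.
exists psi; split => //; split => [i|j]; [rewrite -eS | rewrite -eT]; done.
Qed.

Theorem lemma1 (p nr ns : nat) (f : Vec p -> R)
  (g : 'I_nr -> Vec p -> R) (h : 'I_ns -> Vec p -> R)
  (Hf_cvx : convex f) (Hf_C2 : C2 f)
  (Hg_aff : forall i, affine (g i))
  (Hh_cvx : forall j, convex (h j)) (Hh_C2 : forall j, C2 (h j)) :
  (* 1. uniqueness *)
  (forall rho, 0 <= rho -> strictly_convex (Epen f g h rho) ->
     forall x y, minimizer (Epen f g h rho) x -> minimizer (Epen f g h rho) y ->
     x = y)
  /\
  (* 2. continuity of the minimizer *)
  (forall (rho0 : R) (J : R -> Prop),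
     0 < rho0 -> is_open_interval J -> J rho0 -> (forall rho, J rho -> 0 <= rho) ->
     (forall rho, J rho ->
        strictly_convex (Epen f g h rho) /\ coercive (Epen f g h rho)) ->
     exists xm : R -> Vec p,
       (forall rho, J rho ->
          minimizer (Epen f g h rho) (xm rho) /\
          (forall y, minimizer (Epen f g h rho) y -> y = xm rho)) /\
       (forall eps, 0 < eps -> exists delta, 0 < delta /\
          forall rho, J rho -> Rabs (rho - rho0) < delta ->
            vnorm (vsub (xm rho) (xm rho0)) < eps))
  /\
  (* 3. continuity of the coefficients *)
  (forall (rho0 : R) (J : R -> Prop),
     0 < rho0 -> is_open_interval J -> J rho0 -> (forall rho, J rho -> 0 <= rho) ->
     (forall rho, J rho ->
        strictly_convex (Epen f g h rho) /\ coercive (Epen f g h rho)) ->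
     (forall rho x, J rho -> minimizer (Epen f g h rho) x ->
        active_lin_indep g h x) ->
     exists (xm : R -> Vec p) (sc : R -> 'I_nr -> R) (tc : R -> 'I_ns -> R),
       (forall rho, J rho ->
          minimizer (Epen f g h rho) (xm rho) /\
          (forall y, minimizer (Epen f g h rho) y -> y = xm rho) /\
          opt_cond f g h rho (xm rho) (sc rho) (tc rho) /\
          (forall s' t', opt_cond f g h rho (xm rho) s' t' ->
             (forall i, s' i = sc rho i) /\ (forall j, t' j = tc rho j))) /\
       (forall i eps, 0 < eps -> exists delta, 0 < delta /\
          forall rho, J rho -> Rabs (rho - rho0) < delta ->
            Rabs (sc rho i - sc rho0 i) < eps) /\
       (forall j eps, 0 < eps -> exists delta, 0 < delta /\
          forall rho, J rho -> Rabs (rho - rho0) < delta ->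
            Rabs (tc rho j - tc rho0 j) < eps)).
Proof.
have Hf := C2_seqcont Hf_C2.
have Hg : forall i, seqcont (g i) by move=> i; exact: affine_seqcont.
have Hh : forall j, seqcont (h j) by move=> j; exact: C2_seqcont.
split; [|split].
- move=> rho _ hsc x y hx hy. have := @strict_unique p (Epen f g h rho) hsc x y hx hy. done.
- move=> rho0 J hr0 HJ J0 Hnn HSC; exists (xmin f g h). have := @part2 p nr ns f g h Hf Hg Hh rho0 J HJ J0 HSC. exact.
move=> rho0 J hr0 HJ J0 Hnn HSC HLI.
have [P2a P2b] := part2 Hf Hg Hh HJ J0 HSC.
pose inh : inhabited (('I_nr -> R) * ('I_ns -> R)) := inhabits ((fun _ => 0), (fun _ => 0)).
pose pr rho := epsilon inh (fun st => opt_cond f g h rho (xmin f g h rho) st.1 st.2).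
pose sc rho := (pr rho).1; pose tc rho := (pr rho).2.
have Hopt : forall rho, J rho -> opt_cond f g h rho (xmin f g h rho) (sc rho) (tc rho).
  move=> rho hJ; rewrite /sc /tc /pr.
  apply: (epsilon_spec inh (fun st => opt_cond f g h rho (xmin f g h rho) st.1 st.2)).
  have [s [t ho]] := kkt_exists (J_pos HJ Hnn hJ) (proj1 (P2a rho hJ))
     (C2_grad Hf_C2 _) (fun i => affine_hgrad (Hg_aff i) _) (fun j => C2_grad (Hh_C2 j) _)
     (HLI rho _ hJ (proj1 (P2a rho hJ))).
  by exists (s, t).
exists (xmin f g h), sc, tc; split; [|split].
- move=> rho hJ; split; first exact: (proj1 (P2a rho hJ)).
  split; first exact: (proj2 (P2a rho hJ)).
  split; first exact: Hopt.
  move=> s' t' ho.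
  exact: (coef_unique (J_pos HJ Hnn hJ) (HLI rho _ hJ (proj1 (P2a rho hJ))) (Hopt rho hJ) ho).
- move=> i; apply: (subseq_cont (F := fun rho => sc rho i)) => rn hJn hrn.
  have [psi [hp [hs ht]]] := part3_sub Hf_C2 Hg_aff Hh_C2 hr0 HJ J0 HSC HLI Hopt hJn hrn.
  by exists psi; split => //; exact: hs i.
- move=> j; apply: (subseq_cont (F := fun rho => tc rho j)) => rn hJn hrn.
  have [psi [hp [hs ht]]] := part3_sub Hf_C2 Hg_aff Hh_C2 hr0 HJ J0 HSC HLI Hopt hJn hrn.
  by exists psi; split => //; exact: ht j.
Qed.
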